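(* Let $h\geq 2$. A subgroup $U\leq S_h\times\{id\}$ is an anonymity group with respect to $(h,n)$ for some $n\geq 2$ (here $\{id\}$ is the trivial subgroup of $S_n$), and every subgroup of $S_h\times\{id\}$ arises in this way. Consequently, the set of all anonymity groups (over all $h,n\geq 2$) is exactly $\{V\times\{id\}: V\ \text{a permutation group}\}$.
   Context: Permutations compose as $(\sigma\tau)(x)=\sigma(\tau(x))$. For integers $h,n\geq2$, let $G=S_h\times S_n$ and $\mathcal{P}=(S_n)^h$ (preference profiles), with $G$ acting by $(p^{(\varphi,\psi)})_i=\psi\,p_{\varphi^{-1}(i)}$. A social preference function (SPF) is any $F:\mathcal{P}\to S_n$; its symmetry group is $G(F)=\{(\varphi,\psi)\in G: F(p^{(\varphi,\psi)})=\psi F(p)\ \forall p\}$ and its anonymity group is $G_1(F)=G(F)\cap(S_h\times\{id\})$. A subgroup $U\leq S_h\times\{id\}$ is an anonymity group with respect to $(h,n)$ if $U=G_1(F)$ for some SPF $F$ on $\mathcal{P}=(S_n)^h$. *)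

(* Defs.v *)
From mathcomp Require Import all_boot all_fingroup.
Set Implicit Arguments. Unset Strict Implicit. Unset Printing Implicit Defensive.

(* Convention: the paper composes permutations as (s t)(x) = s (t x).
   In MathComp, (s * t)%g x = t (s x), so the paper's product s t is
   the MathComp product (t * s)%g. *)
Definition pcomp (n : nat) (s t : 'S_n) : 'S_n := (t * s)%g.

Definition profile (h n : nat) := {ffun 'I_h -> 'S_n}.

Definition prof_act (h n : nat) (g : 'S_h * 'S_n) (p : profile h n)
  : profile h n :=
  [ffun i => pcomp g.2 (p ((g.1)^-1%g i))].

Definition SPF (h n : nat) := profile h n -> 'S_n.

Definition sym_group (h n : nat) (F : SPF h n) : {set 'S_h * 'S_n} :=
  [set g : 'S_h * 'S_n |
     [forall p : profile h n, F (prof_act g p) == pcomp g.2 (F p)]].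

Definition anon_group (h n : nat) (F : SPF h n) : {set 'S_h * 'S_n} :=
  sym_group F :&: setX [set: 'S_h] [set 1%g].

Definition is_anonymity_group (h n : nat) (U : {set 'S_h * 'S_n}) : Prop :=
  exists F : SPF h n, U = anon_group F.

(* Main.v *)
Require Import Defs.
From mathcomp Require Import all_boot all_fingroup.
Set Implicit Arguments. Unset Strict Implicit. Unset Printing Implicit Defensive.

Lemma pactE h n (s : 'S_h) (p : profile h n) i :
  prof_act (s, 1%g) p i = p ((s^-1)%g i).
Proof. by rewrite /prof_act ffunE; apply: mulg1. Qed.

Lemma pactM h n (a b : 'S_h) (p : profile h n) :
  prof_act (a, 1%g) (prof_act (b, 1%g) p) = prof_act ((b * a)%g, 1%g) p.
Proof. by apply/ffunP=> i; rewrite !pactE invMg permM. Qed.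

Lemma pact1 h n (p : profile h n) : prof_act (1%g, 1%g) p = p.
Proof. by apply/ffunP=> i; rewrite pactE invg1 perm1. Qed.

Lemma symE h n (F : SPF h n) (s : 'S_h) :
  ((s, 1%g) \in sym_group F) = [forall p, F (prof_act (s, 1%g) p) == F p].
Proof.
rewrite inE; by apply: eq_forallb => p; rewrite /Defs.pcomp /= mulg1.
Qed.

Section Part2.
Variables (h n : nat) (F : SPF h n).
Definition Vset : {set 'S_h} := [set s | (s, 1%g) \in sym_group F].
Lemma VsetE s : (s \in Vset) = [forall p, F (prof_act (s, 1%g) p) == F p].
Proof. by rewrite in_set symE. Qed.
Lemma Vset_group : group_set Vset.
Proof.
apply/group_setP; split.
  by rewrite VsetE; apply/forallP=> p; rewrite pact1.
move=> a b; rewrite !VsetE => /forallP Ha /forallP Hb.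
apply/forallP=> p; rewrite -pactM.
by rewrite (eqP (Hb _)) (eqP (Ha _)).
Qed.
Canonical Vgroup := Group Vset_group.
End Part2.

Section Part1.
Variables (h : nat) (V : {group 'S_h}).
Definition p0 : profile h h.+1 := [ffun i => tperm ord0 (lift ord0 i)].
Lemma p0_inj : injective p0.
Proof.
move=> i j; rewrite !ffunE => E.
have := congr1 (fun s : 'S_h.+1 => s ord0) E; rewrite /= !tpermL.
exact: lift_inj.
Qed.
Definition tau : 'S_h.+1 := tperm ord0 ord_max.
Definition F1 : SPF h h.+1 := fun p =>
  if [exists v in V, p == prof_act (v, 1%g) p0] then 1%g else tau.
Lemma tau_neq1 : 0 < h -> tau != 1%g.
Proof.
move=> h0; apply/eqP => E.
have := congr1 (fun s : 'S_h.+1 => s ord0) E; rewrite /= tpermL perm1.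
by move/(congr1 val) => /=; move: h0; case: (h).
Qed.
Lemma stab_triv (a b : 'S_h) :
  prof_act (a, 1%g) p0 = prof_act (b, 1%g) p0 -> a = b.
Proof.
move=> E.
suff : (a^-1)%g = (b^-1)%g by move/(congr1 (fun x => x^-1)%g); rewrite !invgK.
apply/permP=> i; have := congr1 (fun p : profile h h.+1 => p i) E.
by rewrite /= !pactE => /p0_inj.
Qed.
End Part1.

Theorem mainTheorem5 :
  (forall (h : nat), 1 < h ->
     forall V : {group 'S_h},
       exists n : nat, 1 < n /\
         is_anonymity_group (setX (V : {set 'S_h}) [set 1%g] : {set 'S_h * 'S_n}))
  /\
  (forall (h n : nat), 1 < h -> 1 < n ->
     forall U : {set 'S_h * 'S_n}, is_anonymity_group U ->
       exists V : {group 'S_h}, U = setX (V : {set 'S_h}) [set 1%g]).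
Proof.
split.
  move=> h h1 V; exists h.+1; split; first by apply: ltnW.
  exists (F1 V); apply/setP => [[s t]].
  rewrite /anon_group in_setI !in_setX in_setT in_set1 /=.
  case: (eqVneq t 1%g) => [->|]; last by rewrite !andbF.
  rewrite !andbT symE.
  apply/idP/idP.
    move=> sV; apply/forallP => p; apply/eqP; rewrite /F1.
    congr (if _ then _ else _); apply/existsP/existsP.
      case=> v /andP[vV /eqP E].
      exists (v * s^-1)%g; rewrite groupM ?groupV //=.
      by rewrite -pactM -E pactM mulgV pact1.
    case=> v /andP[vV /eqP E]; exists (v * s)%g; rewrite groupM //=.
    by rewrite E pactM.
  move/forallP/(_ (p0 h)); rewrite /F1.
  have -> : [exists v in V, p0 h == prof_act (v, 1%g) (p0 h)].
    by apply/existsP; exists 1%g; rewrite group1 pact1 eqxx.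
  case: ifP => [|_]; last by rewrite (negbTE (tau_neq1 (ltnW h1))).
  case/existsP=> v /andP[vV /eqP /stab_triv ->] _; exact: vV.
move=> h n _ _ U [F ->]; exists (Vgroup F); apply/setP => [[s t]].
rewrite /anon_group !inE /=.
by case: (eqVneq t 1%g) => [->|]; rewrite ?andbF ?andbT.
Qed.
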